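(* Suppose all populations share the same finite strategy set $S\subset[0,1]$, with minimum $s_{\min}$ and maximum $s_{\max}$, and assume $\frac{\lambda d(1-s)}{\gamma}\ge1$ for all $s\in S$ and all $d\in\{1,\dots,D\}$. For $d\in\{1,\dots,D\}$, $\Theta\in[0,1]$ and $s\in[s_{\min},s_{\max}]$ define $$\mathcal{F}^d(s;\Theta)=s\,r-(1-s)\frac{\lambda d(1-s)\Theta}{\gamma+\lambda d(1-s)\Theta}.$$ If $$|r|\ge 1-\frac{1}{\bigl(1+\frac{\lambda d(1-s_{\min})}{\gamma}\bigr)^2}\qquad\text{for all } d\in\{1,\dots,D\},$$ then $s_{\min}$ is a dominant strategy for every population: for all $d$, all $\Theta\in[0,1]$ and all $s\in[s_{\min},s_{\max}]$, $\mathcal{F}^d(s_{\min};\Theta)\ge\mathcal{F}^d(s;\Theta)$.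
   Context: Constants: $\lambda>0$ (contagion rate), $\gamma>0$ (recovery rate), relative reward $r<0$, degrees $d\in\{1,\dots,D\}$. $\mathcal{F}^d(s;\Theta)$ is the (continuous extension of the) payoff of a degree-$d$ player choosing social-inactivity level $s$ when the broadcast link-infection probability is $\Theta$, the perceived infection probability being the steady-state value $\frac{\lambda d(1-s)\Theta}{\gamma+\lambda d(1-s)\Theta}$. *)

(* Defs.v *)
From Stdlib Require Import Reals List.
Open Scope R_scope.

Definition payoffF (lambda gamma r : R) (d : nat) (s Theta : R) : R :=
  s * r - (1 - s) * (lambda * INR d * (1 - s) * Theta
                      / (gamma + lambda * INR d * (1 - s) * Theta)).

(* Main.v *)
Require Import Defs.
From Stdlib Require Import Reals List Lra Lia.
Open Scope R_scope.

Theorem theorem5 (lambda gamma r : R) (D : nat) (S : list R) (smin smax : R) :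
  0 < lambda -> 0 < gamma -> r < 0 ->
  (forall s, In s S -> 0 <= s <= 1) ->
  In smin S -> In smax S ->
  (forall s, In s S -> smin <= s <= smax) ->
  (forall s (d : nat), In s S -> (1 <= d <= D)%nat ->
      lambda * INR d * (1 - s) / gamma >= 1) ->
  (forall d : nat, (1 <= d <= D)%nat ->
      Rabs r >= 1 - 1 / (1 + lambda * INR d * (1 - smin) / gamma) ^ 2) ->
  forall (d : nat) (Theta s : R), (1 <= d <= D)%nat ->
    0 <= Theta <= 1 -> smin <= s <= smax ->
    payoffF lambda gamma r d smin Theta >= payoffF lambda gamma r d s Theta.
Proof.
  intros Hl Hg Hr HS Hmin Hmax Hrng _ Habs d Theta s Hd HT Hs.
  pose proof (Habs d Hd) as Hb.
  rewrite Rabs_left in Hb by lra.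
  pose proof (HS smax Hmax) as Hsm.
  assert (Hdpos : 1 <= INR d) by (apply (le_INR 1); lia).
  set (L := lambda * INR d).
  assert (HL : 0 < L) by (unfold L; nra).
  set (x0 := 1 - smin). set (x := 1 - s).
  assert (Hx : 0 <= x) by (unfold x; lra).
  assert (Hxx : x <= x0) by (unfold x, x0; lra).
  set (p := L * Theta).
  assert (Hp0 : 0 <= p) by (unfold p; nra).
  assert (HpL : p <= L) by (unfold p; nra).
  set (u := gamma + p * x0). set (v := gamma + p * x).
  assert (Hu : 0 < u) by (unfold u; nra).
  assert (Hv : 0 < v) by (unfold v; nra).
  assert (HuL : u <= gamma + L * x0) by (unfold u; nra).
  fold L x0 in Hb.
  replace (1 / (1 + L * x0 / gamma) ^ 2) with (gamma^2 / (gamma + L*x0)^2) in Hb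
    by (field; nra).
  set (c := gamma^2 / u^2).
  assert (Hc : gamma^2 / (gamma + L*x0)^2 <= c).
  { unfold c, Rdiv. apply Rmult_le_compat_l; [nra|].
    apply Rinv_le_contravar; [nra|]. nra. }
  assert (Hkey : (x0 - x) * (1 - c) - (p * x0^2 / u - p * x^2 / v)
                 = p * gamma^2 * (x0 - x)^2 / (u^2 * v)).
  { unfold c, u, v. field. split; fold v u; lra. }
  assert (Hnn : 0 <= p * gamma^2 * (x0 - x)^2 / (u^2 * v)).
  { apply Rmult_le_pos; [apply Rmult_le_pos; [apply Rmult_le_pos; [lra|apply pow2_ge_0]|apply pow2_ge_0]|]. left. apply Rinv_0_lt_compat. apply Rmult_lt_0_compat; [apply pow_lt|]; lra. }
  unfold payoffF. fold L x0 x.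
  replace (x0 * (L * x0 * Theta / (gamma + L * x0 * Theta))) with (p * x0^2 / u)
    by (unfold u, p; field; unfold u, p in Hu; lra).
  replace (x * (L * x * Theta / (gamma + L * x * Theta))) with (p * x^2 / v)
    by (unfold v, p; field; unfold v, p in Hv; lra).
  assert (Hsr : s * r - smin * r = (x0 - x) * r) by (unfold x, x0; ring).
  assert ((x0 - x) * (1 - c) <= (x0 - x) * (- r)) by nra.
  lra.
Qed.
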